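(* Let $q$ be an odd prime power, let $\omega$ be a non-square in $\mathbb F_q$ and $\epsilon\in\mathbb F_{q^2}$ with $\epsilon^2=\omega$, and write every $z\in\mathbb F_{q^2}$ as $z=z_1+\epsilon z_2$ with $z_1,z_2\in\mathbb F_q$. Let $\mathcal C: aX^2+bXY+cXZ+dYZ+eZ^2=0$ be a non-singular conic of $\mathrm{PG}(2,q^2)$ with $a,b,c,d,e\in\mathbb F_{q^2}$, $b\ne0$. Put $A=-a_2b_1+a_1b_2$, $B=b_2c_1-b_1c_2-a_2d_1+a_1d_2$, $C=-c_2d_1+c_1d_2+b_2e_1-b_1e_2$, $D=d_2e_1-d_1e_2$, and let $\mathcal S$ be the cubic surface of $\mathrm{PG}(3,q)$, in homogeneous coordinates $(t_1:t_2:X:Z)$, with equation $$2t_1t_2(b_1X+d_1Z)-(t_1^2+\omega t_2^2)(b_2X+d_2Z)+AX^3+BX^2Z+CXZ^2+DZ^3=0.$$ Then $\mathcal S$ is irreducible if and only if $b_1d_2-b_2d_1\neq0$.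
   Context: Irreducibility is understood over the algebraic closure of $\mathbb F_q$. *)

(* Defs.v *)
From HB Require Import structures.
From mathcomp Require Import all_boot all_order all_algebra all_field.
From mathcomp Require Import mpoly.
Set Implicit Arguments. Unset Strict Implicit. Unset Printing Implicit Defensive.
Import Order.TTheory GRing.Theory.
Local Open Scope ring_scope.

Definition mirreducible (K : fieldType) (n : nat) (p : {mpoly K[n]}) : Prop :=
  (1 < msize p)%N /\
  forall r s : {mpoly K[n]}, p = r * s -> (msize r <= 1)%N \/ (msize s <= 1)%N.

Definition abs_irreducible (F : fieldType) (n : nat) (p : {mpoly F[n]}) : Prop :=
  forall (K : closedFieldType) (f : {rmorphism F -> K}),
    mirreducible (map_mpoly f p).

(* Gram matrix of the quadratic form  aX^2+bXY+cXZ+dYZ+eZ^2  (char <> 2). *)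
Definition conic_matrix (L : fieldType) (a b c d e : L) : 'M[L]_3 :=
  \matrix_(i < 3, j < 3)
    nth 0 (nth [::] [:: [:: a; b / 2%:R; c / 2%:R];
                        [:: b / 2%:R; 0; d / 2%:R];
                        [:: c / 2%:R; d / 2%:R; e]] i) j.

Definition conic_nonsingular (L : fieldType) (a b c d e : L) : bool :=
  \det (conic_matrix a b c d e) != 0.

Definition cubic_surface (F : fieldType) (w a1 a2 b1 b2 c1 c2 d1 d2 e1 e2 : F)
  : {mpoly F[4]} :=
  let t1 := 'X_(0 : 'I_4) in let t2 := 'X_(1 : 'I_4) in
  let X := 'X_(2 : 'I_4) in let Z := 'X_(3 : 'I_4) in
  let A := - a2 * b1 + a1 * b2 in
  let B := b2 * c1 - b1 * c2 - a2 * d1 + a1 * d2 in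
  let C := - c2 * d1 + c1 * d2 + b2 * e1 - b1 * e2 in
  let D := d2 * e1 - d1 * e2 in
  2%:R%:MP * t1 * t2 * (b1%:MP * X + d1%:MP * Z)
  - (t1 ^+ 2 + w%:MP * t2 ^+ 2) * (b2%:MP * X + d2%:MP * Z)
  + A%:MP * X ^+ 3 + B%:MP * X ^+ 2 * Z + C%:MP * X * Z ^+ 2 + D%:MP * Z ^+ 3.

(* Main.v *)
Require Import Defs.
From HB Require Import structures.
From mathcomp Require Import all_boot all_order all_algebra all_field.
From mathcomp Require Import mpoly.
From mathcomp Require Import zify ring.
Import GRing.Theory.
Local Open Scope ring_scope.

Lemma two_neq0 (F : finFieldType) : odd #|F| -> (2%:R : F) != 0.
Proof.
move=> hq; apply/negP => /eqP h2.
have ch : (2%N \in [pchar F]) by rewrite inE /= h2 eqxx.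
have E := card_pprimeChar ch.
move: hq; rewrite E oddX orbF => /eqP h0.
move: E; rewrite h0 expn0 => E1.
have := finNzRing_gt1 F. 
by rewrite E1.
Qed.

Lemma lin_repr {K : fieldType} {n} (r : {mpoly K[n]}) : (msize r <= 2)%N ->
  r = (r@_0%MM)%:MP + \sum_i r@_U_(i) *: 'X_i.
Proof.
move=> hr; apply/mpolyP => m.
rewrite mcoeffD mcoeffC raddf_sum /=.
under eq_bigr => i _ do rewrite mcoeffZ mcoeffX.
have [->|m0] := eqVneq m 0%MM.
  rewrite mulr1 big1 ?addr0 // => i _.
  case: eqP => [e|]; last by rewrite mulr0.
  by have := mdeg1 i; rewrite e mdeg0.
rewrite mulr0 add0r.
case: (boolP (mdeg m == 1%N)) => [/mdeg1P [j /eqP ->]|m1].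
  rewrite (bigD1 j) //= eqxx mulr1 big1 ?addr0 // => i ij.
  case: eqP => [e|]; last by rewrite mulr0.
  have := congr1 (fun mm : 'X_{1..n} => mm j) e.
  by rewrite /= !mnm1E eqxx (negPf ij).
rewrite big1; last first.
  move=> i _; case: eqP => [e|]; last by rewrite mulr0.
  by rewrite -e mdeg1 eqxx in m1.
apply: memN_msupp_eq0; apply: msize_mdeg_ge.
apply: leq_trans hr _.
move: m1 (mdeg_eq0 m); rewrite (negPf m0).
by case: (mdeg m) => [|[|k]].
Qed.

Definition pt {K : fieldType} (t1 t2 X Z : K) : 'I_4 -> K :=
  fun i => nth 0 [:: t1; t2; X; Z] i.

Definition Pv {K : fieldType} (w a1 a2 b1 b2 c1 c2 d1 d2 e1 e2 t1 t2 X Z : K) : K :=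
  2%:R * t1 * t2 * (b1 * X + d1 * Z)
  - (t1 ^+ 2 + w * t2 ^+ 2) * (b2 * X + d2 * Z)
  + (- a2 * b1 + a1 * b2) * X ^+ 3 + (b2 * c1 - b1 * c2 - a2 * d1 + a1 * d2) * X ^+ 2 * Z
  + (- c2 * d1 + c1 * d2 + b2 * e1 - b1 * e2) * X * Z ^+ 2 + (d2 * e1 - d1 * e2) * Z ^+ 3.

Lemma eval_cs (K : fieldType) (w a1 a2 b1 b2 c1 c2 d1 d2 e1 e2 t1 t2 X Z : K) :
  meval (pt t1 t2 X Z) (cubic_surface w a1 a2 b1 b2 c1 c2 d1 d2 e1 e2)
  = Pv w a1 a2 b1 b2 c1 c2 d1 d2 e1 e2 t1 t2 X Z.
Proof.
rewrite /cubic_surface /Pv.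
rewrite !(rmorphD, rmorphB, rmorphM, rmorphN, rmorphXn) /= !mevalC !mevalXU.
by [].
Qed.

Lemma map_cs (F K : fieldType) (f : {rmorphism F -> K}) (w a1 a2 b1 b2 c1 c2 d1 d2 e1 e2 : F) :
  map_mpoly f (cubic_surface w a1 a2 b1 b2 c1 c2 d1 d2 e1 e2) =
  cubic_surface (f w) (f a1) (f a2) (f b1) (f b2) (f c1) (f c2) (f d1) (f d2) (f e1) (f e2).
Proof.
rewrite /cubic_surface.
rewrite !(rmorphD, rmorphB, rmorphM, rmorphN, rmorphXn) /= !map_mpolyC.
have mX : forall i, map_mpoly f 'X_i = 'X_i :> {mpoly K[4]} by move=> i; exact: map_mpolyX.
rewrite !mX rmorph1 !exprS !expr0 !mulr1.
have h1 : (f 1)%:MP = 1 :> {mpoly K[4]} by rewrite rmorph1.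
by rewrite h1.
Qed.

Definition degle {K : fieldType} (k : nat) (p : {mpoly K[4]}) := (msize p <= k.+1)%N.

Lemma degleD {K : fieldType} i j (p q : {mpoly K[4]}) :
  degle i p -> degle j q -> degle (maxn i j) (p + q).
Proof.
rewrite /degle => hp hq; apply: leq_trans (msizeD_le _ _) _.
by rewrite geq_max -maxnSS !leq_max hp hq orbT.
Qed.
Lemma degleN {K : fieldType} i (p : {mpoly K[4]}) : degle i p -> degle i (- p).
Proof. by rewrite /degle msizeN. Qed.
Lemma degleB {K : fieldType} i j (p q : {mpoly K[4]}) :
  degle i p -> degle j q -> degle (maxn i j) (p - q).
Proof. by move=> hp hq; apply: degleD => //; apply: degleN. Qed.
Lemma degleM {K : fieldType} i j (p q : {mpoly K[4]}) :
  degle i p -> degle j q -> degle (i + j) (p * q).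
Proof.
rewrite /degle => hp hq.
have [->|np] := eqVneq p 0; first by rewrite mul0r msize0.
have [->|nq] := eqVneq q 0; first by rewrite mulr0 msize0.
rewrite msizeM // -subn1; move: (msize p) (msize q) hp hq => a b; lia.
Qed.
Lemma degleX2 {K : fieldType} i (p : {mpoly K[4]}) : degle i p -> degle (i + i) (p ^+ 2).
Proof. by move=> h; rewrite expr2; apply: degleM. Qed.
Lemma degleX3 {K : fieldType} i (p : {mpoly K[4]}) : degle i p -> degle (i + (i + i)) (p ^+ 3).
Proof. by move=> h; rewrite exprS expr2; apply: degleM => //; apply: degleM. Qed.
Lemma degleC {K : fieldType} (c : K) : degle 0 c%:MP_[4].
Proof. by rewrite /degle msizeC; case: (c == 0). Qed.
Lemma degleXi {K : fieldType} (i : 'I_4) : degle 1 ('X_i : {mpoly K[4]}).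
Proof. by rewrite /degle msizeX mdeg1. Qed.

Ltac dg := first
  [ apply: degleD; dg | apply: degleB; dg | apply: degleN; dg
  | apply: degleX2; dg | apply: degleX3; dg | apply: degleM; dg
  | apply: degleC | apply: degleXi ].

Lemma msize_cs (K : fieldType) (w a1 a2 b1 b2 c1 c2 d1 d2 e1 e2 : K) :
  (msize (cubic_surface w a1 a2 b1 b2 c1 c2 d1 d2 e1 e2) <= 4)%N.
Proof.
rewrite /cubic_surface.
set P := (X in (msize X <= _)%N).
have [k [hk hk3]] : exists k, degle k P /\ (k <= 3)%N.
  by eexists; split; [rewrite /P; dg | by []].
by apply: leq_trans hk _.
Qed.

Lemma key (K : fieldType) (w a1 a2 b1 b2 c1 c2 d1 d2 e1 e2 c0 al be ga de : K) :
  w != 0 -> (2%:R : K) != 0 -> b1 * d2 - b2 * d1 != 0 ->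
  ~~ [&& al == 0, be == 0, ga == 0 & de == 0] ->
  (forall t1 t2 X Z, c0 + al * t1 + be * t2 + ga * X + de * Z = 0 ->
     Pv w a1 a2 b1 b2 c1 c2 d1 d2 e1 e2 t1 t2 X Z = 0) -> False.
Proof.
move=> hw h2 hD hnz H.
set P := Pv w a1 a2 b1 b2 c1 c2 d1 d2 e1 e2.
have [hab|hab] := boolP ((al != 0) || (be != 0)).
  have HX : forall X Z, (b2 * X + d2 * Z) * (be ^+ 2 + w * al ^+ 2)
                        + (b1 * X + d1 * Z) * (2%:R * al * be) = 0.
    move=> X Z.
    have [t1 [t2 ht]] : exists t1 t2, c0 + al * t1 + be * t2 + ga * X + de * Z = 0.
      have [a0|a0] := eqVneq al 0.
        have b0 : be != 0 by move: hab; rewrite a0 eqxx.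
        exists 0, (- (c0 + ga * X + de * Z) / be).
        by rewrite a0; field.
      exists (- (c0 + ga * X + de * Z) / al), 0.
      by field.
    have h0 : P t1 t2 X Z = 0 := H _ _ _ _ ht.
    have h1 : P (t1 + be) (t2 - al) X Z = 0.
      by apply: H; rewrite -ht; ring.
    have h3 : P (t1 - be) (t2 + al) X Z = 0.
      by apply: H; rewrite -ht; ring.
    have E : P (t1 + be) (t2 - al) X Z + P (t1 - be) (t2 + al) X Z
             - 2%:R * P t1 t2 X Z =
             - 2%:R * ((b2 * X + d2 * Z) * (be ^+ 2 + w * al ^+ 2)
                        + (b1 * X + d1 * Z) * (2%:R * al * be)).
      by rewrite /P /Pv; ring.
    move: E; rewrite h0 h1 h3 => /eqP.
    rewrite !(addr0, mulr0, subr0) eq_sym mulf_eq0 oppr_eq0 (negPf h2) /=.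
    by move/eqP.
  have E1 := HX 1 0; have E2 := HX 0 1.
  set e := be ^+ 2 + w * al ^+ 2 in E1 E2.
  set f := 2%:R * al * be in E1 E2.
  have he : e * (b1 * d2 - b2 * d1) = 0.
    have -> : e * (b1 * d2 - b2 * d1) =
      b1 * ((b2 * 0 + d2 * 1) * e + (b1 * 0 + d1 * 1) * f)
      - d1 * ((b2 * 1 + d2 * 0) * e + (b1 * 1 + d1 * 0) * f) by ring.
    by rewrite E1 E2; ring.
  have hf : f * (b1 * d2 - b2 * d1) = 0.
    have -> : f * (b1 * d2 - b2 * d1) =
      d2 * ((b2 * 1 + d2 * 0) * e + (b1 * 1 + d1 * 0) * f)
      - b2 * ((b2 * 0 + d2 * 1) * e + (b1 * 0 + d1 * 1) * f) by ring.
    by rewrite E1 E2; ring.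
  move/eqP: he; rewrite mulf_eq0 (negPf hD) orbF => /eqP he.
  move/eqP: hf; rewrite mulf_eq0 (negPf hD) orbF /f !mulf_eq0 (negPf h2) /= => hf.
  case/orP: hf => /eqP hz.
    move: he; rewrite /e hz expr0n /= mulr0 addr0 => /eqP.
    rewrite expf_eq0 /= => hb.
    by move: hab; rewrite hz (eqP hb) eqxx.
  move: he; rewrite /e hz expr0n /= add0r => /eqP.
  rewrite mulf_eq0 (negPf hw) /= expf_eq0 /= => ha.
  by move: hab; rewrite hz (eqP ha) eqxx.
move: hab; rewrite negb_or !negbK => /andP [/eqP a0 /eqP b0].
have HB : forall X Z, c0 + ga * X + de * Z = 0 -> X = 0 /\ Z = 0.
  move=> X Z hXZ.
  have g0 : P 0 0 X Z = 0 by apply: H; rewrite -hXZ a0 b0; ring.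
  have g1 : P 1 0 X Z = 0 by apply: H; rewrite -hXZ a0 b0; ring.
  have g2 : P 1 1 X Z = 0 by apply: H; rewrite -hXZ a0 b0; ring.
  have hv : b2 * X + d2 * Z = 0.
    have -> : b2 * X + d2 * Z = P 0 0 X Z - P 1 0 X Z by rewrite /P /Pv; ring.
    by rewrite g0 g1 subr0.
  have hu : b1 * X + d1 * Z = 0.
    have : 2%:R * (b1 * X + d1 * Z) = 0.
      have -> : 2%:R * (b1 * X + d1 * Z) =
         P 1 1 X Z - P 1 0 X Z + w * (b2 * X + d2 * Z) by rewrite /P /Pv; ring.
      by rewrite g1 g2 hv; ring.
    by move/eqP; rewrite mulf_eq0 (negPf h2) /= => /eqP.
  split.
    have : X * (b1 * d2 - b2 * d1) = 0.
      have -> : X * (b1 * d2 - b2 * d1) = d2 * (b1 * X + d1 * Z) - d1 * (b2 * X + d2 * Z) by ring.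
      by rewrite hu hv; ring.
    by move/eqP; rewrite mulf_eq0 (negPf hD) orbF => /eqP.
  have : Z * (b1 * d2 - b2 * d1) = 0.
    have -> : Z * (b1 * d2 - b2 * d1) = b1 * (b2 * X + d2 * Z) - b2 * (b1 * X + d1 * Z) by ring.
    by rewrite hu hv; ring.
  by move/eqP; rewrite mulf_eq0 (negPf hD) orbF => /eqP.
move: hnz; rewrite a0 b0 eqxx /=.
have [g0|g0] := eqVneq ga 0.
  move=> /= d0.
  have [hx _] := HB 1 (- (c0 + ga) / de) ltac:(rewrite g0; field; exact: d0).
  by move/eqP: hx; rewrite oner_eq0.
move=> _.
have [_ hz] := HB (- (c0 + de) / ga) 1 ltac:(field; exact: g0).
by move/eqP: hz; rewrite oner_eq0.
Qed.

Lemma eval_r (K : fieldType) (r : {mpoly K[4]}) (hr : (msize r <= 2)%N) (t1 t2 X Z : K) :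
  meval (pt t1 t2 X Z) r = r@_0%MM + r@_U_(0 : 'I_4) * t1 + r@_U_(1 : 'I_4) * t2
     + r@_U_(2 : 'I_4) * X + r@_U_(3 : 'I_4) * Z.
Proof.
rewrite {1}(lin_repr _ hr) rmorphD /= mevalC raddf_sum /= !big_ord_recl big_ord0.
rewrite !mevalZ !mevalXU /= addr0 !addrA.
by [].
Qed.

Lemma nonconst (K : fieldType) (p : {mpoly K[4]}) x y :
  meval x p != meval y p -> (1 < msize p)%N.
Proof.
rewrite ltnNge; apply: contra => h.
by rewrite (msize1_polyC h) !mevalC.
Qed.

Lemma red_K (K : fieldType) (w a1 a2 b1 b2 c1 c2 d1 d2 e1 e2 l1 l2 k1 k2 : K) :
  (2%:R : K) != 0 -> (l1 != 0) || (l2 != 0) -> (k1 != 0) || (k2 != 0) ->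
  b1 = k1 * l1 -> b2 = k2 * l1 -> d1 = k1 * l2 -> d2 = k2 * l2 ->
  ~ mirreducible (cubic_surface w a1 a2 b1 b2 c1 c2 d1 d2 e1 e2).
Proof.
move=> h2 hl hk -> -> -> -> [_ H].
pose t1 : {mpoly K[4]} := 'X_(0 : 'I_4). pose t2 : {mpoly K[4]} := 'X_(1 : 'I_4).
pose X : {mpoly K[4]} := 'X_(2 : 'I_4). pose Z : {mpoly K[4]} := 'X_(3 : 'I_4).
pose l := l1%:MP * X + l2%:MP * Z.
pose Q := 2%:R * k1%:MP * t1 * t2 - k2%:MP * (t1 ^+ 2 + w%:MP * t2 ^+ 2)
  + k2%:MP * (a1%:MP * X ^+ 2 + c1%:MP * X * Z + e1%:MP * Z ^+ 2)
  - k1%:MP * (a2%:MP * X ^+ 2 + c2%:MP * X * Z + e2%:MP * Z ^+ 2).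
have E : cubic_surface w a1 a2 (k1 * l1) (k2 * l1) c1 c2 (k1 * l2) (k2 * l2) e1 e2 = l * Q.
  rewrite /cubic_surface /l /Q /t1 /t2 /X /Z /=.
  rewrite !(rmorphM, rmorphD, rmorphB, rmorphN, rmorph_nat) /=.
  ring.
have [] := H _ _ E.
  rewrite leqNgt; apply/negP/negPn.
  case/orP: hl => hl.
    apply: (@nonconst _ _ (pt 0 0 1 0) (pt 0 0 0 0)).
    by rewrite /l !rmorphD !rmorphM /= !mevalC !mevalXU /= !mulr0 !mulr1 !addr0.
  apply: (@nonconst _ _ (pt 0 0 0 1) (pt 0 0 0 0)).
  by rewrite /l !rmorphD !rmorphM /= !mevalC !mevalXU /= !mulr0 !mulr1 !add0r.
rewrite leqNgt; apply/negP/negPn.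
have EQ : forall t1' t2' X' Z', meval (pt t1' t2' X' Z') Q =
   2%:R * k1 * t1' * t2' - k2 * (t1' ^+ 2 + w * t2' ^+ 2)
  + k2 * (a1 * X' ^+ 2 + c1 * X' * Z' + e1 * Z' ^+ 2)
  - k1 * (a2 * X' ^+ 2 + c2 * X' * Z' + e2 * Z' ^+ 2).
  move=> t1' t2' X' Z'.
  by rewrite /Q !(rmorphD, rmorphB, rmorphM, rmorphN, rmorphXn, rmorph_nat) /= !mevalC !mevalXU.
have [k20|k20] := eqVneq k2 0.
  move: hk; rewrite k20 eqxx orbF => hk.
  apply: (@nonconst _ _ (pt 1 1 0 0) (pt 0 0 0 0)).
  rewrite !EQ k20 /=.
  have -> : 2%:R * k1 * 1 * 1 - 0 * (1 ^+ 2 + w * 1 ^+ 2) +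
    0 * (a1 * 0 ^+ 2 + c1 * 0 * 0 + e1 * 0 ^+ 2) -
    k1 * (a2 * 0 ^+ 2 + c2 * 0 * 0 + e2 * 0 ^+ 2) = 2%:R * k1 by ring.
  have -> : 2%:R * k1 * 0 * 0 - 0 * (0 ^+ 2 + w * 0 ^+ 2) +
    0 * (a1 * 0 ^+ 2 + c1 * 0 * 0 + e1 * 0 ^+ 2) -
    k1 * (a2 * 0 ^+ 2 + c2 * 0 * 0 + e2 * 0 ^+ 2) = 0 by ring.
  by rewrite mulf_eq0 negb_or h2.
apply: (@nonconst _ _ (pt 1 0 0 0) (pt 0 0 0 0)).
rewrite !EQ.
have -> : 2%:R * k1 * 1 * 0 - k2 * (1 ^+ 2 + w * 0 ^+ 2) +
    k2 * (a1 * 0 ^+ 2 + c1 * 0 * 0 + e1 * 0 ^+ 2) -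
    k1 * (a2 * 0 ^+ 2 + c2 * 0 * 0 + e2 * 0 ^+ 2) = - k2 by ring.
have -> : 2%:R * k1 * 0 * 0 - k2 * (0 ^+ 2 + w * 0 ^+ 2) +
    k2 * (a1 * 0 ^+ 2 + c1 * 0 * 0 + e1 * 0 ^+ 2) -
    k1 * (a2 * 0 ^+ 2 + c2 * 0 * 0 + e2 * 0 ^+ 2) = 0 by ring.
by rewrite oppr_eq0.
Qed.

Lemma nolin (K : fieldType) (w a1 a2 b1 b2 c1 c2 d1 d2 e1 e2 : K) (r s : {mpoly K[4]}) :
  w != 0 -> (2%:R : K) != 0 -> b1 * d2 - b2 * d1 != 0 ->
  cubic_surface w a1 a2 b1 b2 c1 c2 d1 d2 e1 e2 = r * s ->
  (1 < msize r)%N -> (msize r <= 2)%N -> False.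
Proof.
move=> hw h2 hD E h1 hr.
apply: (@key K w a1 a2 b1 b2 c1 c2 d1 d2 e1 e2 (r@_0%MM) (r@_U_(0 : 'I_4))
  (r@_U_(1 : 'I_4)) (r@_U_(2 : 'I_4)) (r@_U_(3 : 'I_4)) hw h2 hD).
  apply/negP => /and4P [/eqP z0 /eqP z1 /eqP z2 /eqP z3].
  move: h1; rewrite (lin_repr _ hr) !big_ord_recl big_ord0.
  have -> : r@_U_(ord0 : 'I_4) = 0 by exact: z0.
  have -> : r@_U_(lift ord0 (ord0 : 'I_3)) = 0 by exact: z1.
  have -> : r@_U_(lift ord0 (lift ord0 (ord0 : 'I_2))) = 0 by exact: z2.
  have -> : r@_U_(lift ord0 (lift ord0 (lift ord0 (ord0 : 'I_1)))) = 0 by exact: z3.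
  rewrite !scale0r !addr0 msizeC.
  by case: (_ == 0).
move=> t1 t2 X Z ht.
rewrite -eval_cs E mevalM eval_r // ht mul0r.
by [].
Qed.

Lemma irr_K (K : fieldType) (w a1 a2 b1 b2 c1 c2 d1 d2 e1 e2 : K) :
  w != 0 -> (2%:R : K) != 0 -> b1 * d2 - b2 * d1 != 0 ->
  mirreducible (cubic_surface w a1 a2 b1 b2 c1 c2 d1 d2 e1 e2).
Proof.
move=> hw h2 hD; split.
  set DD := b1 * d2 - b2 * d1.
  apply: (@nonconst _ _ (pt 1 0 (- d1 / DD) (b1 / DD)) (pt 0 0 (- d1 / DD) (b1 / DD))).
  rewrite !eval_cs /Pv.
  apply/eqP => h.
  have : (1 : K) = 0.
    have -> : (1 : K) = (b2 * (- d1 / DD) + d2 * (b1 / DD)) by rewrite /DD; field.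
    move: h; set u := (- d1 / DD); set v := (b1 / DD) => h.
    apply/eqP; rewrite -subr_eq0; apply/eqP.
    have -> : b2 * u + d2 * v - 0 =
      - ((2%:R * 1 * 0 * (b1 * u + d1 * v) - (1 ^+ 2 + w * 0 ^+ 2) * (b2 * u + d2 * v) +
  (- a2 * b1 + a1 * b2) * u ^+ 3 + (b2 * c1 - b1 * c2 - a2 * d1 + a1 * d2) * u ^+ 2 * v +
  (- c2 * d1 + c1 * d2 + b2 * e1 - b1 * e2) * u * v ^+ 2 + (d2 * e1 - d1 * e2) * v ^+ 3)
   - (2%:R * 0 * 0 * (b1 * u + d1 * v) - (0 ^+ 2 + w * 0 ^+ 2) * (b2 * u + d2 * v) +
  (- a2 * b1 + a1 * b2) * u ^+ 3 + (b2 * c1 - b1 * c2 - a2 * d1 + a1 * d2) * u ^+ 2 * v +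
  (- c2 * d1 + c1 * d2 + b2 * e1 - b1 * e2) * u * v ^+ 2 + (d2 * e1 - d1 * e2) * v ^+ 3)) by ring.
    by rewrite h subrr oppr0.
  by move/eqP; rewrite oner_eq0.
move=> r s E.
case: (leqP (msize r) 1) => hr; first by left.
case: (leqP (msize s) 1) => hs; first by right.
exfalso.
have r0 : r != 0 by apply: contraTneq hr => ->; rewrite msize0.
have s0 : s != 0 by apply: contraTneq hs => ->; rewrite msize0.
have := msize_cs K w a1 a2 b1 b2 c1 c2 d1 d2 e1 e2.
rewrite E msizeM // => hsz.
have [hr2|hr2] := leqP (msize r) 2.
  exact: (nolin _ _ _ _ _ _ _ _ _ _ _ _ _ _ hw h2 hD E hr hr2).
have hs2 : (msize s <= 2)%N.
  move: hsz hr2 hs; move: (msize r) (msize s) => x y; rewrite -subn1; lia.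
by apply: (nolin K w a1 a2 b1 b2 c1 c2 d1 d2 e1 e2 s r hw h2 hD _ hs hs2); rewrite E mulrC.
Qed.

Theorem mainTheorem5
  (F : finFieldType) (L : fieldExtType F)
  (hq : odd #|F|) (hL : \dim {:L} = 2%N)
  (w : F) (hw : ~ exists x : F, x ^+ 2 = w)
  (eps : L) (heps : eps ^+ 2 = w%:A)
  (a1 a2 b1 b2 c1 c2 d1 d2 e1 e2 : F) :
  let a := a1%:A + eps * a2%:A in
  let b := b1%:A + eps * b2%:A in
  let c := c1%:A + eps * c2%:A in
  let d := d1%:A + eps * d2%:A in
  let e := e1%:A + eps * e2%:A in
  b != 0 ->
  conic_nonsingular a b c d e ->
  (abs_irreducible (cubic_surface w a1 a2 b1 b2 c1 c2 d1 d2 e1 e2)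
   <-> b1 * d2 - b2 * d1 != 0).
Proof.
move=> a b c d e hb _.
have w0 : w != 0 by apply/eqP => w0; apply: hw; exists 0; rewrite w0 expr0n.
have h2 := two_neq0 F hq.
have hb12 : (b1 != 0) || (b2 != 0).
  have [z1|] := eqVneq b1 0; last by [].
  have [z2|] := eqVneq b2 0; last by rewrite orbT.
  by move: hb; rewrite /b z1 z2 !scale0r mulr0 addr0 eqxx.
split.
  move=> Hirr; apply/negP => /eqP hD0.
  have [K [f _]] := countable_algebraic_closure F.
  have := Hirr K f; rewrite map_cs.
  have h2K : (2%:R : K) != 0 by rewrite -(rmorph_nat f) fmorph_eq0.
  have hDK : f b1 * f d2 = f b2 * f d1.
    by apply/eqP; rewrite -subr_eq0 -!rmorphM -rmorphB hD0 rmorph0.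
  have [b10|b10] := eqVneq b1 0.
    have b20 : b2 != 0 by move: hb12; rewrite b10 eqxx.
    have d10 : f d1 = 0.
      move: hDK; rewrite b10 rmorph0 mul0r => /esym /eqP.
      by rewrite mulf_eq0 fmorph_eq0 (negPf b20) /= => /eqP.
    apply: (@red_K K _ _ _ _ _ _ _ _ _ _ _ (f b2) (f d2) 0 1 h2K).
    - by rewrite fmorph_eq0 b20.
    - by rewrite oner_eq0 orbT.
    - by rewrite b10 rmorph0 mul0r.
    - by rewrite mul1r.
    - by rewrite d10 mul0r.
    - by rewrite mul1r.
  have fb1 : f b1 != 0 by rewrite fmorph_eq0.
  apply: (@red_K K _ _ _ _ _ _ _ _ _ _ _ (f b1) (f d1) 1 (f b2 / f b1) h2K).
  - by rewrite fb1.
  - by rewrite oner_eq0.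
  - by rewrite mul1r.
  - by field.
  - by rewrite mul1r.
  - by apply/(mulfI fb1); rewrite hDK; field.
move=> hD K f.
rewrite map_cs; apply: irr_K.
- by rewrite fmorph_eq0.
- by rewrite -(rmorph_nat f) fmorph_eq0.
- by rewrite -!rmorphM -rmorphB fmorph_eq0.
Qed.
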